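(* Let $\nu\in\mathbb{R}$ and let $(u_1,u_2,u_3)$ satisfy $-\nu<u_3<u_2<u_1$. Put $\gamma=u_1+u_2+u_3+2\nu$. Then for all $i\neq j$ in $\{1,2,3\}$ with $\lambda_i(u_1,u_2,u_3)\neq\lambda_j(u_1,u_2,u_3)$, $$\frac{\partial\lambda_i/\partial u_j}{\lambda_i-\lambda_j}=\frac12\,\frac{(\lambda_i-\gamma)-2(u_i-u_j)}{(\lambda_j-\gamma)(u_i-u_j)}.$$
   Context: For $-\nu<u_3<u_2<u_1$ define $$I(u_1,u_2,u_3)=\int_{u_3}^{u_2}\frac{\eta+\nu}{\sqrt{(\eta+\nu)(u_1-\eta)(u_2-\eta)(\eta-u_3)}}\,d\eta,$$ and for $i=1,2,3$ $$\lambda_i(u_1,u_2,u_3)=u_1+u_2+u_3+2\nu-\frac{I}{\partial I/\partial u_i}.$$ These $\lambda_i$ are the characteristic speeds of the single phase Whitham equations for the Camassa–Holm equation. *)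

(* Defs.v *)
From Stdlib Require Import Reals.
From Coquelicot Require Import Coquelicot.
Open Scope R_scope.

(* A point (u1,u2,u3) is represented as a function u : nat -> R, with
   coordinates u 1, u 2, u 3 (other values irrelevant). *)

Definition integrand (nu u1 u2 u3 eta : R) : R :=
  (eta + nu) / sqrt ((eta + nu) * (u1 - eta) * (u2 - eta) * (eta - u3)).

(* I(u1,u2,u3): improper (Riemann) integral from u3 to u2; the integrand has
   integrable inverse-square-root singularities at both endpoints. *)
Definition Iint (nu : R) (u : nat -> R) : R :=
  RInt_gen (integrand nu (u 1%nat) (u 2%nat) (u 3%nat)) (at_right (u 3%nat)) (at_left (u 2%nat)).

Definition upd (u : nat -> R) (j : nat) (t : R) : nat -> R :=
  fun k => if Nat.eqb k j then t else u k.

Definition partial (F : (nat -> R) -> R) (j : nat) (u : nat -> R) : R :=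
  Derive (fun t => F (upd u j t)) (u j).

Definition gamma (nu : R) (u : nat -> R) : R :=
  u 1%nat + u 2%nat + u 3%nat + 2 * nu.

Definition lambda (nu : R) (i : nat) (u : nat -> R) : R :=
  gamma nu u - Iint nu u / partial (Iint nu) i u.

(* Main.v *)
Require Import Defs.
From Stdlib Require Import Reals Lra.
From Coquelicot Require Import Coquelicot.
Open Scope R_scope.
Definition Fb nu a e := sqrt(e+nu) / sqrt(a-e).
Definition Fa_ nu a e := - sqrt(e+nu) / (2 * sqrt(a-e)^3).
Definition Fe_ nu a e := (a+nu) / (2*sqrt(e+nu)*sqrt(a-e)^3).
Definition Fae_ nu a e := -((a-e) + 3*(e+nu)) / (4*sqrt(e+nu)*sqrt(a-e)^5).
Definition Fee_ nu a e := (a+nu)*(3*(e+nu) - (a-e)) / (4*sqrt(e+nu)^3*sqrt(a-e)^5).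

Ltac PQ nu a e :=
  replace (a + - e) with (a - e) in * by ring;
  let HP := fresh in let HQ := fresh in
  assert (HP : sqrt (e+nu) * sqrt (e+nu) = e + nu) by (apply sqrt_sqrt; lra);
  assert (HQ : sqrt (a-e) * sqrt (a-e) = a - e) by (apply sqrt_sqrt; lra);
  assert (sqrt (e+nu) > 0) by (apply sqrt_lt_R0; lra);
  assert (sqrt (a-e) > 0) by (apply sqrt_lt_R0; lra);
  let P := fresh "P" in let Q := fresh "Q" in
  set (P := sqrt (e+nu)) in *; set (Q := sqrt (a-e)) in *;
  try replace (a + nu) with (P*P+Q*Q) by lra;
  try replace (a - e) with (Q*Q) by lra;
  try replace (e + nu) with (P*P) by lra;
  field; lra.

Ltac pos := repeat (match goal with
 | |- 0 < ?a * ?b => apply Rmult_lt_0_compat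
 | |- 0 < sqrt _ => apply sqrt_lt_R0
 | |- 0 < _ ^ _ => apply pow_lt
 | |- 0 < / _ => apply Rinv_0_lt_compat
 | |- _ => lra
 end).
Ltac sq := repeat split; try lra; try (apply Rgt_not_eq; unfold Rgt; pos).

Lemma dFe nu a e : 0 < e + nu -> 0 < a - e -> is_derive (fun z => Fb nu a z) e (Fe_ nu a e).
Proof. intros H1 H2. unfold Fb, Fe_. auto_derive; [sq| PQ nu a e]. Qed.
Lemma dFa nu a e : 0 < e + nu -> 0 < a - e -> is_derive (fun z => Fb nu z e) a (Fa_ nu a e).
Proof. intros H1 H2. unfold Fb, Fa_. auto_derive; [sq| PQ nu a e]. Qed.
Lemma dFae nu a e : 0 < e + nu -> 0 < a - e -> is_derive (fun z => Fa_ nu a z) e (Fae_ nu a e).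
Proof. intros H1 H2. unfold Fae_, Fa_. auto_derive; [sq| PQ nu a e]. Qed.
Lemma dFea nu a e : 0 < e + nu -> 0 < a - e -> is_derive (fun z => Fe_ nu z e) a (Fae_ nu a e).
Proof. intros H1 H2. unfold Fae_, Fe_. auto_derive; [sq| PQ nu a e]. Qed.
Lemma dFee nu a e : 0 < e + nu -> 0 < a - e -> is_derive (fun z => Fe_ nu a z) e (Fee_ nu a e).
Proof. intros H1 H2. unfold Fee_, Fe_. auto_derive; [sq| PQ nu a e]. Qed.

Section C.
Context {U : UniformSpace}.
Lemma cm (f g : U -> R) x : continuous f x -> continuous g x -> continuous (fun y => f y * g y) x.
Proof. intros; apply (continuous_mult f g); auto. Qed.
Lemma cp (f g : U -> R) x : continuous f x -> continuous g x -> continuous (fun y => f y + g y) x.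
Proof. intros; apply (continuous_plus f g); auto. Qed.
Lemma cmi (f g : U -> R) x : continuous f x -> continuous g x -> continuous (fun y => f y - g y) x.
Proof. intros; apply (continuous_minus f g); auto. Qed.
Lemma co (f : U -> R) x : continuous f x -> continuous (fun y => - f y) x.
Proof. intros; apply (continuous_opp f); auto. Qed.
Lemma cinv (f : U -> R) x : continuous f x -> f x <> 0 -> continuous (fun y => / f y) x.
Proof. intros. apply (continuous_comp f Rinv). auto. apply continuous_Rinv; auto. Qed.
Lemma cdiv (f g : U -> R) x : continuous f x -> continuous g x -> g x <> 0 -> continuous (fun y => f y / g y) x.
Proof. intros. unfold Rdiv. apply cm; auto. apply cinv; auto. Qed.
Lemma csqrt (f : U -> R) x : continuous f x -> continuous (fun y => sqrt (f y)) x.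
Proof. intros. apply (continuous_comp f sqrt); auto. apply continuous_sqrt. Qed.
Lemma csin (f : U -> R) x : continuous f x -> continuous (fun y => sin (f y)) x.
Proof. intros. apply (continuous_comp f sin); auto. apply continuous_sin. Qed.
Lemma ccos (f : U -> R) x : continuous f x -> continuous (fun y => cos (f y)) x.
Proof. intros. apply (continuous_comp f cos); auto. apply continuous_cos. Qed.
Lemma cpow (f : U -> R) n x : continuous f x -> continuous (fun y => f y ^ n) x.
Proof. intros. induction n. simpl. apply continuous_const. simpl. apply cm; auto. Qed.
Lemma cc (k : R) x : continuous (fun _ : U => k) x.
Proof. apply continuous_const. Qed.
End C.
Lemma cfst (x : R * R) : continuous (fun p : R*R => fst p) x.
Proof. apply continuous_fst. Qed.
Lemma csnd (x : R * R) : continuous (fun p : R*R => snd p) x.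
Proof. apply continuous_snd. Qed.
Lemma cid (x : R) : continuous (fun p : R => p) x.
Proof. apply continuous_id. Qed.

Ltac cont := repeat (first [ apply cm | apply cp | apply cmi | apply co | apply cdiv | apply cinv
   | apply csqrt | apply csin | apply ccos | apply cpow | apply cc | apply cfst | apply csnd | apply cid ]).


Lemma pderiv (f df : R -> R -> R) (x a b : R) :
  locally x (fun y => forall t, is_derive (fun z => f z t) y (df y t)) ->
  (forall t, continuous (fun p : R*R => df (fst p) (snd p)) (x,t)) ->
  locally x (fun y => forall t, continuous (f y) t) ->
  is_derive (fun y => RInt (f y) a b) x (RInt (df x) a b).
Proof.
intros Hd Hc Hf.
assert (HD : locally x (fun y => forall t, Derive (fun z => f z t) y = df y t)).
{ apply filter_imp with (2 := Hd). intros y Hy t. apply is_derive_unique, Hy. }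
replace (RInt (df x) a b) with (RInt (fun t => Derive (fun u => f u t) x) a b).
2:{ apply RInt_ext. intros t _. apply is_derive_unique.
    destruct Hd as [e He]. apply He. apply ball_center. }
apply is_derive_RInt_param.
- apply filter_imp with (2 := Hd). intros y Hy t _. eexists. apply Hy.
- intros t _. apply continuity_2d_pt_filterlim.
  assert (E : Derive (fun z => f z t) x = df x t).
  { destruct HD as [e He]. apply He. apply ball_center. }
  rewrite E.
  apply filterlim_ext_loc with (f := fun z : R*R => df (fst z) (snd z)).
  + assert (Hl := continuous_fst (U:=R_UniformSpace) (V:=R_UniformSpace) x t).
    specialize (Hl _ HD). unfold filtermap in Hl. eapply filter_imp. 2: exact Hl.
    intros z Hz. simpl. rewrite Hz. reflexivity.
  + apply Hc.
- apply filter_imp with (2 := Hf). intros y Hy. apply (ex_RInt_continuous (V:=R_CompleteNormedModule)). intros; apply Hy.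
Qed.

Definition S2 t := sin t * sin t.
Definition Cc t := 1 - sin t * sin t.
Definition eta b c t := c + (b - c) * S2 t.
Definition dom nu a b c := -nu < b /\ -nu < c /\ b < a /\ c < a.

Lemma S_bnd t : 0 <= S2 t <= 1.
Proof. unfold S2. pose proof (sin2_cos2 t). unfold Rsqr in H. split. nra. nra. Qed.

Lemma eta_bnd nu a b c t : dom nu a b c -> 0 < eta b c t + nu /\ 0 < a - eta b c t.
Proof.
intros [H1 [H2 [H3 H4]]]. unfold eta. pose proof (S_bnd t). set (s := S2 t) in *.
assert (0 <= (b+nu)*s) by (apply Rmult_le_pos; lra).
assert (0 <= (c+nu)*(1-s)) by (apply Rmult_le_pos; lra).
assert (0 <= (a-b)*s) by (apply Rmult_le_pos; lra).
assert (0 <= (a-c)*(1-s)) by (apply Rmult_le_pos; lra).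
destruct (Rle_lt_dec s (1/2)); split; nra.
Qed.

Lemma chain_b (g : R -> R) g' b c t : is_derive g (eta b c t) g' ->
  is_derive (fun z => g (eta z c t)) b (g' * S2 t).
Proof.
intros H. replace (g' * S2 t) with (scal (S2 t) g').
2:{ rewrite Rmult_comm. reflexivity. }
apply (is_derive_comp g (fun z => eta z c t)). exact H.
unfold eta. auto_derive. auto. ring.
Qed.

Lemma chain_c (g : R -> R) g' b c t : is_derive g (eta b c t) g' ->
  is_derive (fun z => g (eta b z t)) c (g' * Cc t).
Proof.
intros H. replace (g' * Cc t) with (scal (Cc t) g').
2:{ rewrite Rmult_comm. reflexivity. }
apply (is_derive_comp g (fun z => eta b z t)). exact H.
unfold eta, Cc, S2. auto_derive. auto. ring.
Qed.

Lemma loc_gt (m x : R) : m < x -> locally x (fun y => m < y).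
Proof.
intros H. assert (He : 0 < x - m) by lra. exists (mkposreal _ He).
intros y Hy. cbv [ball] in Hy. simpl in Hy. unfold AbsRing_ball, abs, minus, plus, opp in Hy. simpl in Hy.
apply Rabs_lt_between in Hy. lra.
Qed.
Lemma loc_lt (m x : R) : x < m -> locally x (fun y => y < m).
Proof.
intros H. assert (He : 0 < m - x) by lra. exists (mkposreal _ He).
intros y Hy. cbv [ball] in Hy. simpl in Hy. unfold AbsRing_ball, abs, minus, plus, opp in Hy. simpl in Hy.
apply Rabs_lt_between in Hy. lra.
Qed.

Lemma loc_dom_a nu a b c : dom nu a b c -> locally a (fun z => dom nu z b c).
Proof.
intros [H1 [H2 [H3 H4]]].
generalize (filter_and _ _ (loc_gt b a H3) (loc_gt c a H4)).
apply filter_imp. intros z [? ?]. repeat split; lra.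
Qed.
Lemma loc_dom_b nu a b c : dom nu a b c -> locally b (fun z => dom nu a z c).
Proof.
intros [H1 [H2 [H3 H4]]].
generalize (filter_and _ _ (loc_gt (-nu) b H1) (loc_lt a b H3)).
apply filter_imp. intros z [? ?]. repeat split; lra.
Qed.
Lemma loc_dom_c nu a b c : dom nu a b c -> locally c (fun z => dom nu a b z).
Proof.
intros [H1 [H2 [H3 H4]]].
generalize (filter_and _ _ (loc_gt (-nu) c H2) (loc_lt a c H4)).
apply filter_imp. intros z [? ?]. repeat split; lra.
Qed.

Definition H0 nu a b c t := 2 * Fb nu a (eta b c t).
Definition H1 nu a b c t := 2 * Fa_ nu a (eta b c t).
Definition H2 nu a b c t := 2 * Fe_ nu a (eta b c t) * S2 t.
Definition H3 nu a b c t := 2 * Fe_ nu a (eta b c t) * Cc t.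
Definition H12 nu a b c t := 2 * Fae_ nu a (eta b c t) * S2 t.
Definition H13 nu a b c t := 2 * Fae_ nu a (eta b c t) * Cc t.
Definition H23 nu a b c t := 2 * Fee_ nu a (eta b c t) * S2 t * Cc t.

Ltac cstep := match goal with
 | |- continuous (fun _ => ?k) _ => apply (cc k)
 | |- continuous (fun y => ?f * ?g) _ => apply (cm (fun y => f) (fun y => g))
 | |- continuous (fun y => ?f + ?g) _ => apply (cp (fun y => f) (fun y => g))
 | |- continuous (fun y => ?f - ?g) _ => apply (cmi (fun y => f) (fun y => g))
 | |- continuous (fun y => - ?f) _ => apply (co (fun y => f))
 | |- continuous (fun y => ?f / ?g) _ => apply (cdiv (fun y => f) (fun y => g))
 | |- continuous (fun y => / ?f) _ => apply (cinv (fun y => f))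
 | |- continuous (fun y => sqrt ?f) _ => apply (csqrt (fun y => f))
 | |- continuous (fun y => sin ?f) _ => apply (csin (fun y => f))
 | |- continuous (fun y => cos ?f) _ => apply (ccos (fun y => f))
 | |- continuous (fun y => ?f ^ ?n) _ => apply (cpow (fun y => f) n)
 | |- continuous (fun p => fst p) _ => apply cfst
 | |- continuous (fun p => snd p) _ => apply csnd
 | |- continuous (fun p => p) _ => apply cid
 | |- continuous (fun y => ?A y) _ => assumption
 end.
Ltac cont' := repeat cstep.

Section Cont.
Context {U : UniformSpace}.
Variables (nu : R) (A B C T : U -> R) (x : U).
Hypothesis (HA : continuous A x) (HB : continuous B x) (HC : continuous C x) (HT : continuous T x).
Hypothesis Hd : dom nu (A x) (B x) (C x).

Ltac fin := unfold H0, H1, H2, H3, H12, H13, H23, Fb, Fa_, Fe_, Fae_, Fee_, eta, S2, Cc;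
  destruct (eta_bnd nu (A x) (B x) (C x) (T x) Hd) as [E1 E2]; unfold eta, S2 in E1, E2;
  cont'; apply Rgt_not_eq; unfold Rgt; pos.

Lemma cH0 : continuous (fun y => H0 nu (A y) (B y) (C y) (T y)) x. Proof. fin. Qed.
Lemma cH1 : continuous (fun y => H1 nu (A y) (B y) (C y) (T y)) x. Proof. fin. Qed.
Lemma cH2 : continuous (fun y => H2 nu (A y) (B y) (C y) (T y)) x. Proof. fin. Qed.
Lemma cH3 : continuous (fun y => H3 nu (A y) (B y) (C y) (T y)) x. Proof. fin. Qed.
Lemma cH12 : continuous (fun y => H12 nu (A y) (B y) (C y) (T y)) x. Proof. fin. Qed.
Lemma cH13 : continuous (fun y => H13 nu (A y) (B y) (C y) (T y)) x. Proof. fin. Qed.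
Lemma cH23 : continuous (fun y => H23 nu (A y) (B y) (C y) (T y)) x. Proof. fin. Qed.
End Cont.

Definition G0 nu a b c := RInt (H0 nu a b c) 0 (PI/2).
Definition G1 nu a b c := RInt (H1 nu a b c) 0 (PI/2).
Definition G2 nu a b c := RInt (H2 nu a b c) 0 (PI/2).
Definition G3 nu a b c := RInt (H3 nu a b c) 0 (PI/2).
Definition G12 nu a b c := RInt (H12 nu a b c) 0 (PI/2).
Definition G13 nu a b c := RInt (H13 nu a b c) 0 (PI/2).
Definition G23 nu a b c := RInt (H23 nu a b c) 0 (PI/2).

Lemma isd_eq (f : R -> R) (x d d' : R) : is_derive f x d' -> d' = d -> is_derive f x d.
Proof. intros H ->; exact H. Qed.
Lemma dk1 (g : R -> R) x d k : is_derive g x d -> is_derive (fun z => k * g z) x (k * d).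
Proof. intros H. apply (is_derive_scal g x k d H). Qed.
Lemma dk2 (g : R -> R) x d k m : is_derive g x d -> is_derive (fun z => k * g z * m) x (k * d * m).
Proof. intros H. apply (is_derive_scal_l (K:=R_AbsRing) (V:=R_NormedModule) (fun z => k * g z) x (k*d) m). apply dk1, H. Qed.

Section PW.
Variables (nu a b c t : R).
Hypothesis Hd : dom nu a b c.
Let Eb := eta_bnd nu a b c t Hd.
Lemma p0a : is_derive (fun z => H0 nu z b c t) a (H1 nu a b c t).
Proof. unfold H0, H1. apply dk1. apply dFa; first [apply (proj1 Eb) | apply (proj2 Eb)]. Qed.
Lemma p0b : is_derive (fun z => H0 nu a z c t) b (H2 nu a b c t).
Proof. unfold H0, H2. eapply isd_eq. apply dk1. apply (chain_b (Fb nu a)). apply dFe; first [apply (proj1 Eb) | apply (proj2 Eb)]. ring. Qed.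
Lemma p0c : is_derive (fun z => H0 nu a b z t) c (H3 nu a b c t).
Proof. unfold H0, H3. eapply isd_eq. apply dk1. apply (chain_c (Fb nu a)). apply dFe; first [apply (proj1 Eb) | apply (proj2 Eb)]. ring. Qed.
Lemma p1b : is_derive (fun z => H1 nu a z c t) b (H12 nu a b c t).
Proof. unfold H1, H12. eapply isd_eq. apply dk1. apply (chain_b (Fa_ nu a)). apply dFae; first [apply (proj1 Eb) | apply (proj2 Eb)]. ring. Qed.
Lemma p1c : is_derive (fun z => H1 nu a b z t) c (H13 nu a b c t).
Proof. unfold H1, H13. eapply isd_eq. apply dk1. apply (chain_c (Fa_ nu a)). apply dFae; first [apply (proj1 Eb) | apply (proj2 Eb)]. ring. Qed.
Lemma p2a : is_derive (fun z => H2 nu z b c t) a (H12 nu a b c t).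
Proof. unfold H2, H12. apply dk2. apply dFea; first [apply (proj1 Eb) | apply (proj2 Eb)]. Qed.
Lemma p3a : is_derive (fun z => H3 nu z b c t) a (H13 nu a b c t).
Proof. unfold H3, H13. apply dk2. apply dFea; first [apply (proj1 Eb) | apply (proj2 Eb)]. Qed.
Lemma p2c : is_derive (fun z => H2 nu a b z t) c (H23 nu a b c t).
Proof. unfold H2, H23. eapply isd_eq. apply dk2. apply (chain_c (Fe_ nu a)). apply dFee; first [apply (proj1 Eb) | apply (proj2 Eb)]. ring. Qed.
Lemma p3b : is_derive (fun z => H3 nu a z c t) b (H23 nu a b c t).
Proof. unfold H3, H23. eapply isd_eq. apply dk2. apply (chain_b (Fe_ nu a)). apply dFee; first [apply (proj1 Eb) | apply (proj2 Eb)]. ring. Qed.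
End PW.

Lemma dG0a nu a b c : dom nu a b c -> is_derive (fun z => G0 nu z b c) a (G1 nu a b c).
Proof.
intros Hd. unfold G0, G1.
apply (pderiv (fun z t => H0 nu z b c t) (fun z t => H1 nu z b c t)).
- generalize (loc_dom_a nu a b c Hd). apply filter_imp. intros y Hy t. apply p0a; auto.
- intros t. apply (cH1 nu fst (fun _ => b) (fun _ => c) snd (a,t)); try apply cfst; try apply csnd; try apply cc; simpl; auto.
- generalize (loc_dom_a nu a b c Hd). apply filter_imp. intros y Hy t.
  apply (cH0 nu (fun _ => y) (fun _ => b) (fun _ => c) (fun p => p) t); try apply cc; try apply cid; auto.
Qed.

Lemma dG0b nu a b c : dom nu a b c -> is_derive (fun z => G0 nu a z c) b (G2 nu a b c).
Proof.
intros Hd. unfold G0, G2.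
apply (pderiv (fun z t => H0 nu a z c t) (fun z t => H2 nu a z c t)).
- generalize (loc_dom_b nu a b c Hd). apply filter_imp. intros y Hy t. apply p0b; auto.
- intros t. apply (cH2 nu (fun _ => a) fst (fun _ => c) snd (b,t)); try apply cfst; try apply csnd; try apply cc; simpl; auto.
- generalize (loc_dom_b nu a b c Hd). apply filter_imp. intros y Hy t.
  apply (cH0 nu (fun _ => a) (fun _ => y) (fun _ => c) (fun p => p) t); try apply cc; try apply cid; auto.
Qed.

Lemma dG0c nu a b c : dom nu a b c -> is_derive (fun z => G0 nu a b z) c (G3 nu a b c).
Proof.
intros Hd. unfold G0, G3.
apply (pderiv (fun z t => H0 nu a b z t) (fun z t => H3 nu a b z t)).
- generalize (loc_dom_c nu a b c Hd). apply filter_imp. intros y Hy t. apply p0c; auto.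
- intros t. apply (cH3 nu (fun _ => a) (fun _ => b) fst snd (c,t)); try apply cfst; try apply csnd; try apply cc; simpl; auto.
- generalize (loc_dom_c nu a b c Hd). apply filter_imp. intros y Hy t.
  apply (cH0 nu (fun _ => a) (fun _ => b) (fun _ => y) (fun p => p) t); try apply cc; try apply cid; auto.
Qed.

Lemma dG1b nu a b c : dom nu a b c -> is_derive (fun z => G1 nu a z c) b (G12 nu a b c).
Proof.
intros Hd. unfold G1, G12.
apply (pderiv (fun z t => H1 nu a z c t) (fun z t => H12 nu a z c t)).
- generalize (loc_dom_b nu a b c Hd). apply filter_imp. intros y Hy t. apply p1b; auto.
- intros t. apply (cH12 nu (fun _ => a) fst (fun _ => c) snd (b,t)); try apply cfst; try apply csnd; try apply cc; simpl; auto.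
- generalize (loc_dom_b nu a b c Hd). apply filter_imp. intros y Hy t.
  apply (cH1 nu (fun _ => a) (fun _ => y) (fun _ => c) (fun p => p) t); try apply cc; try apply cid; auto.
Qed.

Lemma dG1c nu a b c : dom nu a b c -> is_derive (fun z => G1 nu a b z) c (G13 nu a b c).
Proof.
intros Hd. unfold G1, G13.
apply (pderiv (fun z t => H1 nu a b z t) (fun z t => H13 nu a b z t)).
- generalize (loc_dom_c nu a b c Hd). apply filter_imp. intros y Hy t. apply p1c; auto.
- intros t. apply (cH13 nu (fun _ => a) (fun _ => b) fst snd (c,t)); try apply cfst; try apply csnd; try apply cc; simpl; auto.
- generalize (loc_dom_c nu a b c Hd). apply filter_imp. intros y Hy t.
  apply (cH1 nu (fun _ => a) (fun _ => b) (fun _ => y) (fun p => p) t); try apply cc; try apply cid; auto.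
Qed.

Lemma dG2a nu a b c : dom nu a b c -> is_derive (fun z => G2 nu z b c) a (G12 nu a b c).
Proof.
intros Hd. unfold G2, G12.
apply (pderiv (fun z t => H2 nu z b c t) (fun z t => H12 nu z b c t)).
- generalize (loc_dom_a nu a b c Hd). apply filter_imp. intros y Hy t. apply p2a; auto.
- intros t. apply (cH12 nu fst (fun _ => b) (fun _ => c) snd (a,t)); try apply cfst; try apply csnd; try apply cc; simpl; auto.
- generalize (loc_dom_a nu a b c Hd). apply filter_imp. intros y Hy t.
  apply (cH2 nu (fun _ => y) (fun _ => b) (fun _ => c) (fun p => p) t); try apply cc; try apply cid; auto.
Qed.

Lemma dG2c nu a b c : dom nu a b c -> is_derive (fun z => G2 nu a b z) c (G23 nu a b c).
Proof.
intros Hd. unfold G2, G23.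
apply (pderiv (fun z t => H2 nu a b z t) (fun z t => H23 nu a b z t)).
- generalize (loc_dom_c nu a b c Hd). apply filter_imp. intros y Hy t. apply p2c; auto.
- intros t. apply (cH23 nu (fun _ => a) (fun _ => b) fst snd (c,t)); try apply cfst; try apply csnd; try apply cc; simpl; auto.
- generalize (loc_dom_c nu a b c Hd). apply filter_imp. intros y Hy t.
  apply (cH2 nu (fun _ => a) (fun _ => b) (fun _ => y) (fun p => p) t); try apply cc; try apply cid; auto.
Qed.

Lemma dG3a nu a b c : dom nu a b c -> is_derive (fun z => G3 nu z b c) a (G13 nu a b c).
Proof.
intros Hd. unfold G3, G13.
apply (pderiv (fun z t => H3 nu z b c t) (fun z t => H13 nu z b c t)).
- generalize (loc_dom_a nu a b c Hd). apply filter_imp. intros y Hy t. apply p3a; auto.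
- intros t. apply (cH13 nu fst (fun _ => b) (fun _ => c) snd (a,t)); try apply cfst; try apply csnd; try apply cc; simpl; auto.
- generalize (loc_dom_a nu a b c Hd). apply filter_imp. intros y Hy t.
  apply (cH3 nu (fun _ => y) (fun _ => b) (fun _ => c) (fun p => p) t); try apply cc; try apply cid; auto.
Qed.

Lemma dG3b nu a b c : dom nu a b c -> is_derive (fun z => G3 nu a z c) b (G23 nu a b c).
Proof.
intros Hd. unfold G3, G23.
apply (pderiv (fun z t => H3 nu a z c t) (fun z t => H23 nu a z c t)).
- generalize (loc_dom_b nu a b c Hd). apply filter_imp. intros y Hy t. apply p3b; auto.
- intros t. apply (cH23 nu (fun _ => a) fst (fun _ => c) snd (b,t)); try apply cfst; try apply csnd; try apply cc; simpl; auto.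
- generalize (loc_dom_b nu a b c Hd). apply filter_imp. intros y Hy t.
  apply (cH3 nu (fun _ => a) (fun _ => y) (fun _ => c) (fun p => p) t); try apply cc; try apply cid; auto.
Qed.

Lemma exR (f : R -> R) a b : (forall t, continuous f t) -> ex_RInt f a b.
Proof. intros H. apply (ex_RInt_continuous (V:=R_CompleteNormedModule)). intros; apply H. Qed.

Lemma lin3 (f g h : R -> R) k a b : (forall t, continuous f t) -> (forall t, continuous g t) -> (forall t, continuous h t) ->
  RInt (fun t => k * f t - g t + h t) a b = k * RInt f a b - RInt g a b + RInt h a b.
Proof.
intros Hf Hg Hh.
assert (E1 : RInt (fun t => k * f t) a b = k * RInt f a b).
{ apply (RInt_scal (V:=R_CompleteNormedModule) f a b k). apply exR; auto. }
assert (X1 : ex_RInt (fun t => k * f t) a b).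
{ apply exR. intros t. apply cm; auto. apply cc. }
assert (E2 : RInt (fun t => k * f t - g t) a b = RInt (fun t => k * f t) a b - RInt g a b).
{ apply (RInt_minus (V:=R_CompleteNormedModule) (fun t => k * f t) g a b); auto. apply exR; auto. }
assert (X2 : ex_RInt (fun t => k * f t - g t) a b).
{ apply exR. intros t. apply cmi; auto. apply cm; auto. apply cc. }
rewrite <- E1, <- E2.
apply (RInt_plus (V:=R_CompleteNormedModule) (fun t => k * f t - g t) h a b); auto. apply exR; auto.
Qed.

Lemma ibp (f W : R -> R) : (forall t, is_derive W t (f t)) -> (forall t, continuous f t) ->
  W 0 = 0 -> W (PI/2) = 0 -> RInt f 0 (PI/2) = 0.
Proof.
intros Hd Hc H0' H1'.
assert (K : is_RInt f 0 (PI/2) (minus (W (PI/2)) (W 0))).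
{ apply (is_RInt_derive (V:=R_CompleteNormedModule)); intros; auto. }
apply (is_RInt_unique (V:=R_CompleteNormedModule)) in K. rewrite K, H0', H1'. unfold minus, plus, opp; simpl. ring.
Qed.

Lemma chain_t (g : R -> R) g' b c t : is_derive g (eta b c t) g' ->
  is_derive (fun z => g (eta b c z)) t (g' * ((b-c)*(2*sin t*cos t))).
Proof.
intros H. replace (g' * ((b-c)*(2*sin t*cos t))) with (scal ((b-c)*(2*sin t*cos t)) g').
2:{ rewrite Rmult_comm. reflexivity. }
apply (is_derive_comp g (fun z => eta b c z)). exact H.
unfold eta, S2. auto_derive. auto. ring.
Qed.

Lemma dWsc (h : R -> R) h' k t : is_derive h t h' ->
  is_derive (fun z => k * h z * sin z * cos z) t (k*h'*sin t*cos t + k*h t*(cos t*cos t - sin t*sin t)).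
Proof.
intros H. auto_derive. exists h'; auto. replace (Derive (fun x : R => h x) t) with h'. ring. symmetry. apply (is_derive_unique h t h' H).
Qed.

Lemma dW (g : R -> R) g' k b c t : is_derive g (eta b c t) g' ->
  is_derive (fun z => k * g (eta b c z) * sin z * cos z) t
    (k*g'*(b-c)*2*S2 t*Cc t + k*g (eta b c t)*(Cc t - S2 t)).
Proof.
intros H. eapply isd_eq. apply (dWsc (fun z => g (eta b c z))). apply chain_t, H.
assert (Hc : cos t * cos t = 1 - sin t * sin t).
{ pose proof (sin2_cos2 t) as HH. unfold Rsqr in HH. lra. }
unfold Cc, S2.
assert (E : k * (g' * ((b - c) * (2 * sin t * cos t))) * sin t * cos t = k*g'*(b-c)*2*(sin t*sin t)*(cos t*cos t)) by ring.
rewrite E, Hc. ring.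
Qed.

Lemma Fid nu a e : 0 < e + nu -> 0 < a - e -> Fe_ nu a e = 2 * Fa_ nu a e - 2 * (a - e) * Fae_ nu a e.
Proof.
intros H1 H2. unfold Fe_, Fa_, Fae_.
let nu := constr:(nu) in let a := constr:(a) in let e := constr:(e) in
  let HP := fresh in let HQ := fresh in
  assert (HP : sqrt (e+nu) * sqrt (e+nu) = e + nu) by (apply sqrt_sqrt; lra);
  assert (HQ : sqrt (a-e) * sqrt (a-e) = a - e) by (apply sqrt_sqrt; lra);
  assert (sqrt (e+nu) > 0) by (apply sqrt_lt_R0; lra);
  assert (sqrt (a-e) > 0) by (apply sqrt_lt_R0; lra);
  let P := fresh "P" in let Q := fresh "Q" in
  set (P := sqrt (e+nu)) in *; set (Q := sqrt (a-e)) in *;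
  replace (a + nu) with (P*P+Q*Q) by lra;
  replace (a - e) with (Q*Q) by lra;
  replace (e + nu) with (P*P) by lra;
  field; lra.
Qed.

Lemma contH nu a b c (Hd : dom nu a b c) :
  (forall t, continuous (H0 nu a b c) t) /\ (forall t, continuous (H1 nu a b c) t) /\
  (forall t, continuous (H2 nu a b c) t) /\ (forall t, continuous (H3 nu a b c) t) /\
  (forall t, continuous (H12 nu a b c) t) /\ (forall t, continuous (H13 nu a b c) t) /\
  (forall t, continuous (H23 nu a b c) t).
Proof.
repeat split; intro t.
- apply (cH0 nu (fun _ => a) (fun _ => b) (fun _ => c) (fun p => p) t); try apply cc; try apply cid; auto.
- apply (cH1 nu (fun _ => a) (fun _ => b) (fun _ => c) (fun p => p) t); try apply cc; try apply cid; auto.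
- apply (cH2 nu (fun _ => a) (fun _ => b) (fun _ => c) (fun p => p) t); try apply cc; try apply cid; auto.
- apply (cH3 nu (fun _ => a) (fun _ => b) (fun _ => c) (fun p => p) t); try apply cc; try apply cid; auto.
- apply (cH12 nu (fun _ => a) (fun _ => b) (fun _ => c) (fun p => p) t); try apply cc; try apply cid; auto.
- apply (cH13 nu (fun _ => a) (fun _ => b) (fun _ => c) (fun p => p) t); try apply cc; try apply cid; auto.
- apply (cH23 nu (fun _ => a) (fun _ => b) (fun _ => c) (fun p => p) t); try apply cc; try apply cid; auto.
Qed.

Ltac lin3c Hd := destruct (contH _ _ _ _ Hd) as [C0 [C1 [C2 [C3 [C12 [C13 C23]]]]]];
  match goal with |- ?k * RInt ?f _ _ - RInt ?g _ _ + RInt ?h _ _ = 0 =>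
    rewrite <- (lin3 f g h k); auto end.

Lemma cpt (f g h : R -> R) k : (forall t, continuous f t) -> (forall t, continuous g t) -> (forall t, continuous h t) ->
  forall t, continuous (fun t => k * f t - g t + h t) t.
Proof. intros. apply cp; auto. apply cmi; auto. apply cm; auto. apply cc. Qed.

Lemma EPD23 nu a b c : dom nu a b c -> 2*(b-c) * G23 nu a b c - G2 nu a b c + G3 nu a b c = 0.
Proof.
intros Hd. unfold G23, G2, G3. lin3c Hd.
apply (ibp _ (fun z => 2 * Fe_ nu a (eta b c z) * sin z * cos z)).
- intros t. destruct (eta_bnd nu a b c t Hd).
  eapply isd_eq. apply dW. apply dFee; auto.
  unfold H23, H2, H3. ring.
- apply cpt; auto.
- rewrite sin_0. ring.
- rewrite cos_PI2. ring.
Qed.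

Lemma EPD12 nu a b c : dom nu a b c -> 2*(a-b) * G12 nu a b c - G1 nu a b c + G2 nu a b c = 0.
Proof.
intros Hd. unfold G12, G1, G2. lin3c Hd.
apply (ibp _ (fun z => -2 * Fa_ nu a (eta b c z) * sin z * cos z)).
- intros t. destruct (eta_bnd nu a b c t Hd).
  eapply isd_eq. apply dW. apply dFae; auto.
  unfold H12, H1, H2. rewrite (Fid nu a (eta b c t)); auto. unfold Cc, eta, S2. ring.
- apply cpt; auto.
- rewrite sin_0. ring.
- rewrite cos_PI2. ring.
Qed.

Lemma EPD13 nu a b c : dom nu a b c -> 2*(a-c) * G13 nu a b c - G1 nu a b c + G3 nu a b c = 0.
Proof.
intros Hd. unfold G13, G1, G3. lin3c Hd.
apply (ibp _ (fun z => 2 * Fa_ nu a (eta b c z) * sin z * cos z)).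
- intros t. destruct (eta_bnd nu a b c t Hd).
  eapply isd_eq. apply dW. apply dFae; auto.
  unfold H13, H1, H3. rewrite (Fid nu a (eta b c t)); auto. unfold Cc, eta, S2. ring.
- apply cpt; auto.
- rewrite sin_0. ring.
- rewrite cos_PI2. ring.
Qed.

Lemma sqrt_lt1 y : 0 <= y -> y < 1 -> sqrt y < 1.
Proof. intros. rewrite <- sqrt_1. apply sqrt_lt_1; lra. Qed.

Lemma asin_pos x : 0 < x < 1 -> 0 < asin x < PI/2.
Proof.
intros Hx. destruct (asin_bound_lt x) as [A1 A2]; try lra. split; auto.
destruct (Rlt_le_dec 0 (asin x)) as [h|h]; auto. exfalso.
assert (0 <= sin (- asin x)) by (apply sin_ge_0; pose proof PI_RGT_0; lra).
rewrite sin_neg, sin_asin in H; lra.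
Qed.

Lemma cont_at_0_asin : continuous asin 0.
Proof.
apply continuity_pt_filterlim. apply derivable_continuous_pt. apply derivable_pt_asin. lra.
Qed.

Lemma lim_within (f : R -> R) (D : R -> Prop) x l : continuous f x -> f x = l -> filterlim f (within D (locally x)) (locally l).
Proof.
intros Hc <-. intros P HP. specialize (Hc P HP). unfold filtermap in *. unfold within.
apply filter_imp with (2 := Hc). auto.
Qed.

Lemma prod_le_loc (x y : R) (P : R * R -> Prop) : locally (x,y) P -> filter_prod (locally x) (locally y) P.
Proof.
intros [e He]. exists (ball x e) (ball y e).
- exists e; auto.
- exists e; auto.
- intros u v Hu Hv. apply He. split; auto.
Qed.

Section IintSec.
Variables (nu a b c : R).
Hypotheses (Hc : -nu < c) (Hcb : c < b) (Hba : b < a).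

Definition T1 x := asin (sqrt ((x - c)/(b-c))).
Definition T2 x := PI/2 - asin (sqrt ((b - x)/(b-c))).

Lemma T1_range x : c < x < b -> 0 < T1 x < PI/2.
Proof.
intros Hx. unfold T1. apply asin_pos. split.
- apply sqrt_lt_R0. apply Rdiv_lt_0_compat; lra.
- apply sqrt_lt1. apply Rlt_le, Rdiv_lt_0_compat; lra.
  apply (Rmult_lt_reg_r (b-c)). lra. unfold Rdiv. rewrite Rmult_assoc, Rinv_l; lra.
Qed.

Lemma T2_range x : c < x < b -> 0 < T2 x < PI/2.
Proof.
intros Hx. unfold T2.
assert (0 < asin (sqrt ((b - x)/(b-c))) < PI/2); [|lra].
apply asin_pos. split.
- apply sqrt_lt_R0. apply Rdiv_lt_0_compat; lra.
- apply sqrt_lt1. apply Rlt_le, Rdiv_lt_0_compat; lra.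
  apply (Rmult_lt_reg_r (b-c)). lra. unfold Rdiv. rewrite Rmult_assoc, Rinv_l; lra.
Qed.

Lemma eta_T1 x : c < x < b -> eta b c (T1 x) = x.
Proof.
intros Hx. unfold eta, S2, T1.
assert (0 <= (x - c)/(b-c)) by (apply Rlt_le, Rdiv_lt_0_compat; lra).
assert ((x - c)/(b-c) <= 1).
{ apply (Rmult_le_reg_r (b-c)). lra. unfold Rdiv. rewrite Rmult_assoc, Rinv_l; lra. }
rewrite sin_asin.
2:{ split. pose proof (sqrt_pos ((x - c)/(b-c))); lra. rewrite <- sqrt_1. apply sqrt_le_1; lra. }
rewrite sqrt_sqrt; auto. field. lra.
Qed.

Lemma eta_T2 x : c < x < b -> eta b c (T2 x) = x.
Proof.
intros Hx. unfold eta, S2, T2. rewrite sin_shift.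
assert (0 <= (b - x)/(b-c)) by (apply Rlt_le, Rdiv_lt_0_compat; lra).
assert ((b - x)/(b-c) <= 1).
{ apply (Rmult_le_reg_r (b-c)). lra. unfold Rdiv. rewrite Rmult_assoc, Rinv_l; lra. }
rewrite cos_asin.
2:{ split. pose proof (sqrt_pos ((b - x)/(b-c))); lra. rewrite <- sqrt_1. apply sqrt_le_1; lra. }
unfold Rsqr. rewrite (sqrt_sqrt ((b - x)/(b-c))); auto.
rewrite sqrt_sqrt; [field; lra | lra].
Qed.
End IintSec.

Section IintSec2.
Variables (nu a b c : R).
Hypotheses (Hc : -nu < c) (Hcb : c < b) (Hba : b < a).

Lemma integ_cont y : c < y < b -> continuous (integrand nu a b c) y.
Proof.
intros Hy. unfold integrand. cont'. apply Rgt_not_eq. unfold Rgt. pos.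
Qed.

Lemma dom_of : dom nu a b c.
Proof. repeat split; lra. Qed.

Lemma pw y : 0 < y < PI/2 -> scal ((b-c)*(2*sin y*cos y)) (integrand nu a b c (eta b c y)) = H0 nu a b c y.
Proof.
intros Hy.
assert (Hs : 0 < sin y) by (apply sin_gt_0; lra).
assert (Hco : 0 < cos y) by (apply cos_gt_0; lra).
destruct (eta_bnd nu a b c y dom_of) as [E1 E2].
assert (Hcc : cos y * cos y = 1 - sin y * sin y) by (pose proof (sin2_cos2 y) as HH; unfold Rsqr in HH; lra).
assert (HP : sqrt (eta b c y + nu) * sqrt (eta b c y + nu) = eta b c y + nu) by (apply sqrt_sqrt; lra).
assert (HQ : sqrt (a - eta b c y) * sqrt (a - eta b c y) = a - eta b c y) by (apply sqrt_sqrt; lra).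
assert (P0 : 0 < sqrt (eta b c y + nu)) by (apply sqrt_lt_R0; lra).
assert (Q0 : 0 < sqrt (a - eta b c y)) by (apply sqrt_lt_R0; lra).
unfold integrand, H0, Fb.
set (e := eta b c y) in *.
set (P := sqrt (e + nu)) in *. set (Q := sqrt (a - e)) in *.
assert (K : (e + nu) * (a - e) * (b - e) * (e - c) = (P * Q * ((b - c) * sin y * cos y)) * (P * Q * ((b - c) * sin y * cos y))).
{ assert (B1 : b - e = (b - c) * (cos y * cos y)) by (unfold e, eta, S2; rewrite Hcc; ring).
  assert (B2 : e - c = (b - c) * (sin y * sin y)) by (unfold e, eta, S2; ring).
  rewrite B1, B2, <- HP, <- HQ. ring. }
rewrite K, sqrt_square.
2:{ apply Rlt_le. pos. }
unfold scal; simpl; unfold mult; simpl.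
rewrite <- HP at 1. field. repeat split; apply Rgt_not_eq; unfold Rgt; pos.
Qed.

Lemma T1_cont : continuous (T1 b c) c.
Proof.
unfold T1. apply (continuous_comp (fun x => sqrt ((x - c)/(b-c))) asin).
- cont'. lra.
- replace (sqrt ((c - c)/(b-c))) with 0. apply cont_at_0_asin.
  unfold Rminus. rewrite Rplus_opp_r. unfold Rdiv. rewrite Rmult_0_l, sqrt_0. reflexivity.
Qed.
Lemma T2_cont : continuous (T2 b c) b.
Proof.
unfold T2. apply cmi. apply cc. apply (continuous_comp (fun x => sqrt ((b - x)/(b-c))) asin).
- cont'. lra.
- replace (sqrt ((b - b)/(b-c))) with 0. apply cont_at_0_asin.
  unfold Rminus. rewrite Rplus_opp_r. unfold Rdiv. rewrite Rmult_0_l, sqrt_0. reflexivity.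
Qed.
Lemma T1_c : T1 b c c = 0.
Proof. unfold T1. unfold Rminus at 1. rewrite Rplus_opp_r. unfold Rdiv. rewrite Rmult_0_l, sqrt_0, asin_0. reflexivity. Qed.
Lemma T2_b : T2 b c b = PI/2.
Proof. unfold T2. unfold Rminus at 2. rewrite Rplus_opp_r. unfold Rdiv. rewrite Rmult_0_l, sqrt_0, asin_0. ring. Qed.

Lemma isRIgen : is_RInt_gen (integrand nu a b c) (at_right c) (at_left b) (G0 nu a b c).
Proof.
unfold is_RInt_gen.
apply filterlimi_lim_ext_loc with (f := fun ab : R * R => RInt (H0 nu a b c) (T1 b c (fst ab)) (T2 b c (snd ab))).
- exists (fun x => c < x < b) (fun x => c < x < b).
  + generalize (loc_lt b c Hcb). unfold at_right, within. apply filter_imp. intros; lra.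
  + generalize (loc_gt c b Hcb). unfold at_left, within. apply filter_imp. intros; lra.
  + intros x1 x2 H1 H2. simpl.
    destruct (T1_range b c Hcb x1 H1) as [R1 R1'].
    destruct (T2_range b c Hcb x2 H2) as [R2 R2'].
    replace (RInt (H0 nu a b c) (T1 b c x1) (T2 b c x2)) with (RInt (integrand nu a b c) x1 x2).
    * apply (RInt_correct (V:=R_CompleteNormedModule)).
      apply (ex_RInt_continuous (V:=R_CompleteNormedModule)). intros z Hz. apply integ_cont.
      split. apply Rlt_le_trans with (Rmin x1 x2). apply Rmin_glb_lt; lra. apply Hz.
      apply Rle_lt_trans with (Rmax x1 x2). apply Hz. apply Rmax_lub_lt; lra.
    * rewrite <- (eta_T1 b c Hcb x1 H1) at 1.
      rewrite <- (eta_T2 b c Hcb x2 H2) at 1.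
      rewrite <- (RInt_comp (V:=R_CompleteNormedModule) (integrand nu a b c) (eta b c) (fun y => (b-c)*(2*sin y*cos y))).
      -- apply RInt_ext. intros y Hy. apply pw.
         split. apply Rle_lt_trans with (Rmin (T1 b c x1) (T2 b c x2)). apply Rmin_glb; lra. apply Hy.
         apply Rlt_le_trans with (Rmax (T1 b c x1) (T2 b c x2)). apply Hy. apply Rmax_lub; lra.
      -- intros y Hy. apply integ_cont.
         assert (0 < y < PI/2).
         { split. apply Rlt_le_trans with (Rmin (T1 b c x1) (T2 b c x2)). apply Rmin_glb_lt; lra. apply Hy.
           apply Rle_lt_trans with (Rmax (T1 b c x1) (T2 b c x2)). apply Hy. apply Rmax_lub_lt; lra. }
         assert (0 < sin y) by (apply sin_gt_0; lra).
         assert (0 < cos y) by (apply cos_gt_0; lra).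
         assert (Hcc : cos y * cos y = 1 - sin y * sin y) by (pose proof (sin2_cos2 y) as HH; unfold Rsqr in HH; lra).
         unfold eta, S2. split.
         ++ assert (0 < (b - c) * (sin y * sin y)) by pos. lra.
         ++ assert (0 < (b - c) * (cos y * cos y)) by pos. nra.
      -- intros y _. split.
         ++ unfold eta, S2. auto_derive. auto. ring.
         ++ cont'.
- unfold G0.
  apply (filterlim_comp_2 (G:=locally 0) (H:=locally (PI/2)) (fun ab : R*R => T1 b c (fst ab)) (fun ab : R*R => T2 b c (snd ab)) (fun x y => RInt (H0 nu a b c) x y)).
  + apply (filterlim_comp _ _ _ fst (T1 b c) _ (at_right c)). apply filterlim_fst.
    apply lim_within. apply T1_cont. apply T1_c.
  + apply (filterlim_comp _ _ _ snd (T2 b c) _ (at_left b)). apply filterlim_snd.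
    rewrite <- T2_b. apply lim_within. apply T2_cont. reflexivity.
  + intros P HP.
    assert (Hc2 := continuous_RInt (V:=R_NormedModule) (H0 nu a b c) 0 (PI/2) (fun x y => RInt (H0 nu a b c) x y)).
    assert (HH : locally (0, PI/2) (fun z : R*R => is_RInt (H0 nu a b c) (fst z) (snd z) (RInt (H0 nu a b c) (fst z) (snd z)))).
    { apply filter_forall. intros z. apply (RInt_correct (V:=R_CompleteNormedModule)). apply exR. apply (contH _ _ _ _ dom_of). }
    specialize (Hc2 HH P HP). apply prod_le_loc. exact Hc2.
Qed.

End IintSec2.

Lemma Iint_eq nu (u : nat -> R) : -nu < u 3%nat -> u 3%nat < u 2%nat -> u 2%nat < u 1%nat ->
  Iint nu u = G0 nu (u 1%nat) (u 2%nat) (u 3%nat).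
Proof.
intros H1 H2 H3. unfold Iint. apply is_RInt_gen_unique. apply isRIgen; auto.
Qed.

Lemma Gpos nu a b c : dom nu a b c ->
  0 < G0 nu a b c /\ G1 nu a b c < 0 /\ 0 < G2 nu a b c /\ 0 < G3 nu a b c.
Proof.
intros Hd. destruct (contH _ _ _ _ Hd) as [C0 [C1 [C2 [C3 _]]]].
pose proof PI_RGT_0 as HPI.
assert (Fp : forall t, 0 < Fb nu a (eta b c t) /\ Fa_ nu a (eta b c t) < 0 /\ 0 < Fe_ nu a (eta b c t)).
{ intros t. destruct (eta_bnd nu a b c t Hd) as [E1 E2]. unfold Fb, Fa_, Fe_.
  assert (0 < a + nu) by lra.
  split; [|split].
  - unfold Rdiv. pos.
  - assert (0 < sqrt (eta b c t + nu) / (2 * sqrt (a - eta b c t) ^ 3)) by (unfold Rdiv; pos).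
    unfold Rdiv in *. rewrite Ropp_mult_distr_l_reverse. lra.
  - unfold Rdiv. pos. }
split; [|split; [|split]].
- apply RInt_gt_0; auto. lra. intros t _. unfold H0. destruct (Fp t) as [? _]. lra.
- assert (K : RInt (fun _ => 0) 0 (PI/2) = 0).
  { rewrite (RInt_const (V:=R_CompleteNormedModule)). unfold scal; simpl; unfold mult; simpl. ring. }
  unfold G1. assert (KK : RInt (H1 nu a b c) 0 (PI/2) < RInt (fun _ => 0) 0 (PI/2)).
  { apply RInt_lt; auto. lra. intros; apply cc.
    intros t _. unfold H1. destruct (Fp t) as [_ [? _]]. lra. }
  rewrite K in KK. exact KK.
- apply RInt_gt_0; auto. lra. intros t Ht. unfold H2, S2. destruct (Fp t) as [_ [_ ?]].
  assert (0 < sin t) by (apply sin_gt_0; lra). pos.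
- apply RInt_gt_0; auto. lra. intros t Ht. unfold H3, Cc. destruct (Fp t) as [_ [_ ?]].
  assert (0 < cos t) by (apply cos_gt_0; lra).
  assert (Hcc : cos t * cos t = 1 - sin t * sin t) by (pose proof (sin2_cos2 t) as HH; unfold Rsqr in HH; lra).
  rewrite <- Hcc. pos.
Qed.

Lemma alg (G Gi Gj Gij ui uj gam li lj : R) :
  G <> 0 -> Gi <> 0 -> Gj <> 0 -> ui <> uj -> 2 * (ui - uj) * Gij = Gi - Gj ->
  li = gam - G / Gi -> lj = gam - G / Gj -> li <> lj ->
  (1 - (Gj * Gi - G * Gij) / Gi ^ 2) / (li - lj) =
  / 2 * (((li - gam) - 2 * (ui - uj)) / ((lj - gam) * (ui - uj))).
Proof.
intros h0 hi hj hu hE hli hlj hne.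
assert (hd : li - lj <> 0) by lra.
assert (Gij = (Gi - Gj) / (2 * (ui - uj))).
{ apply (Rmult_eq_reg_l (2 * (ui - uj))). rewrite hE. field. lra. apply Rmult_integral_contrapositive; split; lra. }
subst Gij.
assert (hd' : G * (Gi - Gj) <> 0).
{ apply Rmult_integral_contrapositive; split; auto. intro. apply hne. rewrite hli, hlj.
  replace Gj with Gi by lra. reflexivity. }
rewrite hli, hlj in *. field. repeat split; auto.
- intro; apply hu; lra.
- intro HH; apply h0; lra.
- intro HH; apply hd'; replace (G*(Gi-Gj)) with ((gam * Gi - G) * Gj - (gam * Gj - G) * Gi) by ring; exact HH.
Qed.

Lemma dsub (f g : R -> R) (x df dg : R) : is_derive f x df -> is_derive g x dg ->
  is_derive (fun t => f t - g t) x (df - dg).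
Proof. intros. apply (is_derive_minus f g x df dg); auto. Qed.

From Stdlib Require Import FunctionalExtensionality.

Lemma upd_same (u : nat -> R) j : upd u j (u j) = u.
Proof. apply functional_extensionality. intro k. unfold upd. destruct (Nat.eqb_spec k j); subst; auto. Qed.

Lemma main_case nu (u : nat -> R) (i j : nat) (D : (nat -> R) -> Prop) (G Gi Gj : (nat->R) -> R) (Gij : R) :
  D u ->
  locally (u j) (fun t => D (upd u j t)) ->
  (forall v, D v -> Iint nu v = G v) ->
  (forall v, D v -> partial (Iint nu) i v = Gi v) ->
  partial (Iint nu) j u = Gj u ->
  is_derive (fun t => G (upd u j t)) (u j) (Gj u) ->
  is_derive (fun t => Gi (upd u j t)) (u j) Gij ->
  2 * (u i - u j) * Gij = Gi u - Gj u ->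
  (forall t, gamma nu (upd u j t) = gamma nu u + (t - u j)) ->
  G u <> 0 -> Gi u <> 0 -> Gj u <> 0 -> u i <> u j ->
  lambda nu i u <> lambda nu j u ->
  partial (lambda nu i) j u / (lambda nu i u - lambda nu j u) =
    / 2 * (((lambda nu i u - gamma nu u) - 2 * (u i - u j)) / ((lambda nu j u - gamma nu u) * (u i - u j))).
Proof.
intros HD Hloc HI HPi HPj Hd0 Hdi HE Hgam N0 Ni Nj Nu Nl.
assert (Li : lambda nu i u = gamma nu u - G u / Gi u) by (unfold lambda; rewrite HI, HPi; auto).
assert (Lj : lambda nu j u = gamma nu u - G u / Gj u) by (unfold lambda; rewrite HI, HPj; auto).
assert (Dl : partial (lambda nu i) j u = 1 - (Gj u * Gi u - G u * Gij) / Gi u ^ 2).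
{ unfold partial. apply is_derive_unique.
  apply is_derive_ext_loc with (f := fun t => (gamma nu u + (t - u j)) - G (upd u j t) / Gi (upd u j t)).
  - apply filter_imp with (2 := Hloc). intros t Ht. unfold lambda. rewrite HI, HPi, Hgam; auto.
  - apply dsub.
    + auto_derive. auto. ring.
    + eapply isd_eq. apply is_derive_div. apply Hd0. apply Hdi. cbv beta. rewrite upd_same. auto.
      cbv beta. rewrite upd_same. reflexivity. }
rewrite Dl. apply (alg (G u) (Gi u) (Gj u) Gij (u i) (u j) (gamma nu u)); auto.
Qed.

Definition Dm nu (v : nat -> R) := -nu < v 3%nat /\ v 3%nat < v 2%nat /\ v 2%nat < v 1%nat.

Lemma dom_Dm nu v : Dm nu v -> dom nu (v 1%nat) (v 2%nat) (v 3%nat).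
Proof. intros [? [? ?]]. repeat split; lra. Qed.

Lemma locD nu v k : (k = 1%nat \/ k = 2%nat \/ k = 3%nat) -> Dm nu v -> locally (v k) (fun t => Dm nu (upd v k t)).
Proof.
intros Hk [H1 [H2 H3]]. unfold Dm, upd.
destruct Hk as [-> | [-> | ->]]; cbn [Nat.eqb].
- apply filter_imp with (2 := loc_gt _ _ H3). intros; repeat split; lra.
- apply filter_imp with (2 := filter_and _ _ (loc_gt _ _ H2) (loc_lt _ _ H3)). intros t [? ?]; repeat split; lra.
- apply filter_imp with (2 := filter_and _ _ (loc_gt _ _ H1) (loc_lt _ _ H2)). intros t [? ?]; repeat split; lra.
Qed.

Definition Gv (g : R -> R -> R -> R -> R) nu (v : nat -> R) := g nu (v 1%nat) (v 2%nat) (v 3%nat).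

Lemma IintG nu v : Dm nu v -> Iint nu v = Gv G0 nu v.
Proof. intros [? [? ?]]. apply Iint_eq; auto. Qed.

Lemma partial_I nu v k Gk : (k = 1%nat \/ k = 2%nat \/ k = 3%nat) -> Dm nu v ->
  is_derive (fun t => Gv G0 nu (upd v k t)) (v k) Gk -> partial (Iint nu) k v = Gk.
Proof.
intros Hk HD Hd. unfold partial. apply is_derive_unique.
apply is_derive_ext_loc with (f := fun t => Gv G0 nu (upd v k t)); auto.
apply filter_imp with (2 := locD nu v k Hk HD). intros t Ht. symmetry. apply IintG; auto.
Qed.

Lemma P1 nu v : Dm nu v -> partial (Iint nu) 1 v = Gv G1 nu v.
Proof. intros HD. apply partial_I; auto. unfold Gv, upd; cbn [Nat.eqb]. apply dG0a, dom_Dm, HD. Qed.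
Lemma P2 nu v : Dm nu v -> partial (Iint nu) 2 v = Gv G2 nu v.
Proof. intros HD. apply partial_I; auto. unfold Gv, upd; cbn [Nat.eqb]. apply dG0b, dom_Dm, HD. Qed.
Lemma P3 nu v : Dm nu v -> partial (Iint nu) 3 v = Gv G3 nu v.
Proof. intros HD. apply partial_I; auto. unfold Gv, upd; cbn [Nat.eqb]. apply dG0c, dom_Dm, HD. Qed.

Lemma gam_upd nu u j : (j = 1%nat \/ j = 2%nat \/ j = 3%nat) -> forall t, gamma nu (upd u j t) = gamma nu u + (t - u j).
Proof. intros Hj t. unfold gamma, upd. destruct Hj as [-> | [-> | ->]]; cbn [Nat.eqb]; ring. Qed.

Ltac fin := first [ assumption | (apply locD; auto) | apply IintG | (apply P1; auto) | (apply P2; auto) | (apply P3; auto)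
  | (unfold Gv, upd; cbn [Nat.eqb]; first [apply dG0a|apply dG0b|apply dG0c|apply dG1b|apply dG1c|apply dG2a|apply dG2c|apply dG3a|apply dG3b]; auto)
  | (apply gam_upd; auto) | (unfold Gv; lra) | lra ].

Theorem lemma2p3 (nu : R) (u : nat -> R) :
  - nu < u 3%nat -> u 3%nat < u 2%nat -> u 2%nat < u 1%nat ->
  forall i j : nat,
    (i = 1%nat \/ i = 2%nat \/ i = 3%nat) ->
    (j = 1%nat \/ j = 2%nat \/ j = 3%nat) ->
    i <> j ->
    lambda nu i u <> lambda nu j u ->
    partial (lambda nu i) j u / (lambda nu i u - lambda nu j u) =
    / 2 * (((lambda nu i u - gamma nu u) - 2 * (u i - u j)) /
           ((lambda nu j u - gamma nu u) * (u i - u j))).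
Proof.
intros h3 h2 h1 i j Hi Hj Hij Hl.
assert (HD : Dm nu u) by (repeat split; auto).
assert (Hdom := dom_Dm nu u HD).
destruct (Gpos _ _ _ _ Hdom) as [g0 [g1 [g2 g3]]].
pose proof (EPD12 _ _ _ _ Hdom) as e12.
pose proof (EPD13 _ _ _ _ Hdom) as e13.
pose proof (EPD23 _ _ _ _ Hdom) as e23.
destruct Hi as [-> | [-> | ->]]; destruct Hj as [-> | [-> | ->]]; try (exfalso; apply Hij; reflexivity).
- apply (main_case nu u 1 2 (Dm nu) (Gv G0 nu) (Gv G1 nu) (Gv G2 nu) (G12 nu (u 1%nat) (u 2%nat) (u 3%nat)));
  [ exact HD | apply locD; auto | apply IintG | apply P1 | apply P2; exact HD
  | unfold Gv, upd; cbn [Nat.eqb]; apply dG0b; exact Hdom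
  | unfold Gv, upd; cbn [Nat.eqb]; apply dG1b; exact Hdom
  | unfold Gv; lra | apply gam_upd; auto | unfold Gv; lra | unfold Gv; lra | unfold Gv; lra | lra | exact Hl ].
- apply (main_case nu u 1 3 (Dm nu) (Gv G0 nu) (Gv G1 nu) (Gv G3 nu) (G13 nu (u 1%nat) (u 2%nat) (u 3%nat)));
  [ exact HD | apply locD; auto | apply IintG | apply P1 | apply P3; exact HD
  | unfold Gv, upd; cbn [Nat.eqb]; apply dG0c; exact Hdom
  | unfold Gv, upd; cbn [Nat.eqb]; apply dG1c; exact Hdom
  | unfold Gv; lra | apply gam_upd; auto | unfold Gv; lra | unfold Gv; lra | unfold Gv; lra | lra | exact Hl ].
- apply (main_case nu u 2 1 (Dm nu) (Gv G0 nu) (Gv G2 nu) (Gv G1 nu) (G12 nu (u 1%nat) (u 2%nat) (u 3%nat)));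
  [ exact HD | apply locD; auto | apply IintG | apply P2 | apply P1; exact HD
  | unfold Gv, upd; cbn [Nat.eqb]; apply dG0a; exact Hdom
  | unfold Gv, upd; cbn [Nat.eqb]; apply dG2a; exact Hdom
  | unfold Gv; lra | apply gam_upd; auto | unfold Gv; lra | unfold Gv; lra | unfold Gv; lra | lra | exact Hl ].
- apply (main_case nu u 2 3 (Dm nu) (Gv G0 nu) (Gv G2 nu) (Gv G3 nu) (G23 nu (u 1%nat) (u 2%nat) (u 3%nat)));
  [ exact HD | apply locD; auto | apply IintG | apply P2 | apply P3; exact HD
  | unfold Gv, upd; cbn [Nat.eqb]; apply dG0c; exact Hdom
  | unfold Gv, upd; cbn [Nat.eqb]; apply dG2c; exact Hdom
  | unfold Gv; lra | apply gam_upd; auto | unfold Gv; lra | unfold Gv; lra | unfold Gv; lra | lra | exact Hl ].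
- apply (main_case nu u 3 1 (Dm nu) (Gv G0 nu) (Gv G3 nu) (Gv G1 nu) (G13 nu (u 1%nat) (u 2%nat) (u 3%nat)));
  [ exact HD | apply locD; auto | apply IintG | apply P3 | apply P1; exact HD
  | unfold Gv, upd; cbn [Nat.eqb]; apply dG0a; exact Hdom
  | unfold Gv, upd; cbn [Nat.eqb]; apply dG3a; exact Hdom
  | unfold Gv; lra | apply gam_upd; auto | unfold Gv; lra | unfold Gv; lra | unfold Gv; lra | lra | exact Hl ].
- apply (main_case nu u 3 2 (Dm nu) (Gv G0 nu) (Gv G3 nu) (Gv G2 nu) (G23 nu (u 1%nat) (u 2%nat) (u 3%nat)));
  [ exact HD | apply locD; auto | apply IintG | apply P3 | apply P2; exact HD
  | unfold Gv, upd; cbn [Nat.eqb]; apply dG0b; exact Hdom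
  | unfold Gv, upd; cbn [Nat.eqb]; apply dG3b; exact Hdom
  | unfold Gv; lra | apply gam_upd; auto | unfold Gv; lra | unfold Gv; lra | unfold Gv; lra | lra | exact Hl ].
Qed.
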